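(* Let $n\ge 6$ and let $CTG_n$ be the set of chemical tricyclic graphs on $n$ vertices. Define the following subsets of $CTG_n$ (in each, all $m_{i,j}$ not listed are $0$): for $j=0,1,\dots,5$, $\gamma_{9+j}$ is the set of $G\in CTG_n$ with $n_4=0,n_3=4,n_2=n-4,n_1=0$, $m_{2,3}=2+2j$, $m_{3,3}=5-j$, $m_{2,2}=n-5-j$; and $\gamma_{65}$ is the set of $G\in CTG_n$ with $n_4=0,n_3=5,n_2=n-6,n_1=1$, $m_{1,2}=1$, $m_{2,3}=1$, $m_{3,3}=7$, $m_{2,2}=n-7$. Let $G_1\in\gamma_9$, $G_2\in\gamma_{10}$, $G_3\in\gamma_{11}$, $G_4\in\gamma_{12}$, $G_5\in\gamma_{13}$, $G_6\in\gamma_{14}$, $G_7\in\gamma_{65}$, and let $G\in CTG_n$ not belong to $\gamma_9\cup\cdots\cup\gamma_{14}\cup\gamma_{65}$. Then $SO(G_1)<SO(G_2)<SO(G_3)<SO(G_4)<SO(G_5)<SO(G_6)<SO(G_7)<SO(G)$.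
   Context: All graphs are simple and connected. A chemical graph is a graph with maximum degree at most $4$; a tricyclic graph is a connected graph with $n$ vertices and $n+2$ edges. $d_G(u)$ is the degree of $u$, $n_i$ the number of vertices of degree $i$, and $m_{i,j}$ the number of edges joining a vertex of degree $i$ to a vertex of degree $j$. The Sombor index is $SO(G)=\sum_{uv\in E(G)}\sqrt{d_G(u)^2+d_G(v)^2}$. *)

(* Defs.v *)
From HB Require Import structures.
From mathcomp Require Import all_boot all_order all_algebra.
Set Implicit Arguments. Unset Strict Implicit. Unset Printing Implicit Defensive.
Import Order.TTheory GRing.Theory Num.Theory.

Section Graphs.
Variable n : nat.
Implicit Types (e : rel 'I_n).

Definition simple_graph e : Prop := symmetric e /\ irreflexive e.

Definition connected_graph e : Prop := forall x y : 'I_n, connect e x y.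

Definition deg e (u : 'I_n) : nat := #|[pred v | e u v]|.

Definition nedges e : nat :=
  #|[pred p : 'I_n * 'I_n | (p.1 < p.2)%N && e p.1 p.2]|.

Definition chemical e : Prop := forall u : 'I_n, (deg e u <= 4)%N.

Definition CTG e : Prop :=
  [/\ simple_graph e, connected_graph e, nedges e = n + 2 & chemical e].

Definition nv e (i : nat) : nat := #|[pred u | deg e u == i]|.

Definition me e (i j : nat) : nat :=
  #|[pred p : 'I_n * 'I_n | [&& (p.1 < p.2)%N, e p.1 p.2 &
      ((deg e p.1 == i) && (deg e p.2 == j))
      || ((deg e p.1 == j) && (deg e p.2 == i))]]|.

Definition SO (R : rcfType) e : R :=
  \sum_(u : 'I_n) \sum_(v : 'I_n | (u < v)%N && e u v)
     Num.sqrt (((deg e u) ^ 2 + (deg e v) ^ 2)%:R).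

(* the pairs (i,j), 1 <= i <= j <= 4, indexing all possible m_{i,j}
   in a chemical graph (degree-0 vertices are impossible in connected
   graphs with n >= 2 vertices, and such m's vanish anyway) *)
Definition mpairs : seq (nat * nat) :=
  [:: (1,1); (1,2); (1,3); (1,4); (2,2); (2,3); (2,4); (3,3); (3,4); (4,4)].

Definition mtable e (vals : seq ((nat * nat) * nat)) : Prop :=
  forall ij, ij \in mpairs ->
    me e ij.1 ij.2 = odflt 0 (omap snd (ohead (filter (fun p => p.1 == ij) vals))).

Definition gamma9 (j : nat) e : Prop :=
  CTG e /\ [/\ nv e 4 = 0, nv e 3 = 4, nv e 2 = n - 4, nv e 1 = 0 &
      mtable e [:: ((2,3), 2 + 2 * j); ((3,3), 5 - j); ((2,2), n - 5 - j)]].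

Definition gamma65 e : Prop :=
  CTG e /\ [/\ nv e 4 = 0, nv e 3 = 5, nv e 2 = n - 6, nv e 1 = 1 &
      mtable e [:: ((1,2), 1); ((2,3), 1); ((3,3), 7); ((2,2), n - 7)]].

End Graphs.

(* Main.v *)
Require Import Defs.
From HB Require Import structures.
From mathcomp Require Import all_boot all_order all_algebra.
From mathcomp Require Import zify ring lra.
Import Order.TTheory GRing.Theory Num.Theory.


Set Implicit Arguments. Unset Strict Implicit.

Definition tp (i j a b : nat) : bool := ((a == i) && (b == j)) || ((a == j) && (b == i)).

Section Comb.
Variable n : nat.
Variable e : rel 'I_n.
Hypothesis esym : symmetric e.
Hypothesis eirr : irreflexive e.
Local Notation d := (deg e).

Lemma degE u : d u = \sum_(v : 'I_n) (e u v : nat).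
Proof. by rewrite /deg -sum1_card big_mkcond /=; apply: eq_bigr => v _; rewrite inE; case: (e u v). Qed.

Lemma meE i j : me e i j = \sum_(u : 'I_n) \sum_(v : 'I_n) (((u < v)%N && e u v) * tp i j (d u) (d v)).
Proof.
rewrite /me -sum1_card pair_big /= big_mkcond /=; apply: eq_bigr => p _.
by rewrite inE /tp; case: (p.1 < p.2)%N; case: (e p.1 p.2); case: (_ || _).
Qed.

Lemma nedgesE : nedges e = \sum_(u : 'I_n) \sum_(v : 'I_n) (((u < v)%N && e u v) : nat).
Proof.
rewrite /nedges -sum1_card pair_big /= big_mkcond /=; apply: eq_bigr => p _.
by rewrite inE; case: (_ && _).
Qed.

Lemma nvE i : nv e i = \sum_(u : 'I_n) (d u == i : nat).
Proof. by rewrite /nv -sum1_card big_mkcond /=; apply: eq_bigr => v _; rewrite inE; case: (_ == _). Qed.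

Lemma sum_sym (F : 'I_n -> 'I_n -> nat) : (forall u v, F u v = F v u) ->
  \sum_(u : 'I_n) \sum_(v : 'I_n) (e u v * F u v) = 2 * \sum_(u : 'I_n) \sum_(v : 'I_n) (((u < v)%N && e u v) * F u v).
Proof.
move=> hF.
have h : forall u v, e u v * F u v = ((u < v)%N && e u v) * F u v + ((v < u)%N && e v u) * F v u.
  move=> u v; case: (ltngtP u v) => h /=; rewrite ?addn0 ?add0n //.
    by rewrite esym hF.
  have huv : u = v by apply: val_inj.
  by rewrite huv eirr.
under eq_bigr do under eq_bigr do rewrite h.
under eq_bigr do rewrite big_split /=.
rewrite big_split /= [X in _ + X = _]exchange_big /=.
by rewrite addnn mul2n.
Qed.

Lemma sum_swap (F : 'I_n -> 'I_n -> nat) :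
  \sum_(u : 'I_n) \sum_(v : 'I_n) (e u v * F u v) = \sum_(u : 'I_n) \sum_(v : 'I_n) (e u v * F v u).
Proof. rewrite exchange_big; apply: eq_bigr => u _; apply: eq_bigr => v _; by rewrite esym. Qed.

Definition O i j := \sum_(u : 'I_n) \sum_(v : 'I_n) (e u v * ((d u == i) && (d v == j))).

Lemma O_sym i j : O i j = O j i.
Proof. rewrite /O sum_swap; apply: eq_bigr => u _; apply: eq_bigr => v _; by rewrite andbC. Qed.

Lemma tpC i j a b : tp i j a b = tp i j b a.
Proof. by rewrite /tp orbC; congr orb; rewrite andbC. Qed.

Lemma tp_split i j a b : i != j ->
  (tp i j a b : nat) = ((a == i) && (b == j)) + ((a == j) && (b == i)).
Proof.
move=> hij; have H : ~~ (((a == i) && (b == j)) && ((a == j) && (b == i))).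
  apply/negP => /andP[/andP[/eqP ha _] /andP[/eqP ha' _]].
  by move: hij; rewrite -ha -ha' eqxx.
by move: H; rewrite /tp; case: (a == i); case: (b == j); case: (a == j); case: (b == i).
Qed.

Lemma O_neq i j : i != j -> O i j = me e i j.
Proof.
move=> hij.
have : 2 * me e i j = O i j + O j i.
  rewrite meE -sum_sym; last by move=> u v; rewrite tpC.
  rewrite /O -big_split /=; apply: eq_bigr => u _; rewrite -big_split /=; apply: eq_bigr => v _.
  by rewrite -mulnDr tp_split.
rewrite O_sym; lia.
Qed.

Lemma O_eq i : O i i = 2 * me e i i.
Proof.
rewrite meE -sum_sym; last by move=> u v; rewrite tpC.
by rewrite /O; apply: eq_bigr => u _; apply: eq_bigr => v _; rewrite /tp orbb.
Qed.

Lemma deg_pos u v : e u v -> (0 < d v)%N.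
Proof. by move=> huv; rewrite degE (bigD1 u) //= esym huv. Qed.

Lemma deg_rel i : (forall u, d u <= 4)%N ->
  i * nv e i = O i 1 + O i 2 + O i 3 + O i 4.
Proof.
move=> h4.
have -> : i * nv e i = \sum_(u : 'I_n) \sum_(v : 'I_n) (e u v * (d u == i)).
  rewrite nvE big_distrr /=; apply: eq_bigr => u _.
  rewrite -big_distrl /= -degE; case: eqP => [->|] /=; lia.
rewrite /O -!big_split /=; apply: eq_bigr => u _; rewrite -!big_split /=; apply: eq_bigr => v _.
case huv: (e u v); rewrite ?mul0n //= !mul1n.
have := deg_pos huv; have := h4 v.
case: (d v) => [|[|[|[|[|k]]]]] //= _ _; case: (d u == i) => //=.
Qed.

Lemma card_rel : (forall u, d u <= 4)%N ->
  n = nv e 0 + nv e 1 + nv e 2 + nv e 3 + nv e 4.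
Proof.
move=> h4; rewrite !nvE -!big_split /=.
rewrite -{1}(card_ord n) -sum1_card; apply: eq_bigr => u _.
have := h4 u; case: (d u) => [|[|[|[|[|k]]]]] //=.
Qed.

End Comb.


Unset Implicit Arguments.
Set Strict Implicit.

Local Open Scope ring_scope.


Lemma tp_count a b : (1 <= a <= 4)%N -> (1 <= b <= 4)%N ->
  (\sum_(ij <- mpairs) (tp ij.1 ij.2 a b : nat) = 1)%N.
Proof.
rewrite /mpairs !big_cons big_nil.
by case: a => [|[|[|[|[|a]]]]] //=; case: b => [|[|[|[|[|b]]]]].
Qed.

Definition fq (R : rcfType) (ij : nat * nat) : R := Num.sqrt ((ij.1 ^ 2 + ij.2 ^ 2)%N%:R).

Lemma tp_sqrt (R : rcfType) a b : (1 <= a <= 4)%N -> (1 <= b <= 4)%N ->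
  Num.sqrt ((a ^ 2 + b ^ 2)%N%:R) = \sum_(ij <- mpairs) (tp ij.1 ij.2 a b)%:R * fq R ij :> R.
Proof.
rewrite /mpairs !big_cons big_nil /fq /=.
by case: a => [|[|[|[|[|a]]]]] //=; case: b => [|[|[|[|[|b]]]]] //= _ _;
  rewrite ?mul1r ?mul0r ?addr0 ?add0r.
Qed.

Section Sums.
Variable n : nat.
Variable e : rel 'I_n.
Hypothesis esym : symmetric e.
Hypothesis eirr : irreflexive e.
Hypothesis h4 : forall u, (deg e u <= 4)%N.
Local Notation d := (deg e).

Lemma deg_rng u v : e u v -> (1 <= d u <= 4)%N && (1 <= d v <= 4)%N.
Proof.
move=> huv; rewrite !h4 (deg_pos esym huv) andbT /= !andbT.
idtac.
by apply: (deg_pos esym (u:=v)); rewrite esym.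
Qed.

Lemma nedges_pairs : nedges e = (\sum_(ij <- mpairs) me e ij.1 ij.2)%N.
Proof.
rewrite nedgesE.
under [RHS]eq_bigr do rewrite meE.
rewrite [RHS]exchange_big /=; apply: eq_bigr => u _.
rewrite [RHS]exchange_big /=; apply: eq_bigr => v _.
rewrite -big_distrr /=.
case huv: (e u v); rewrite ?andbF ?mul0n //.
case/andP: (@deg_rng u v huv) => h1 h2.
by rewrite tp_count // muln1.
Qed.

Lemma SO_pairs (R : rcfType) : SO R e = \sum_(ij <- mpairs) (me e ij.1 ij.2)%:R * fq R ij.
Proof.
rewrite /SO.
under [RHS]eq_bigr do rewrite meE natr_sum big_distrl /=.
rewrite [RHS]exchange_big /=; apply: eq_bigr => u _.
under [RHS]eq_bigr do rewrite natr_sum big_distrl /=.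
rewrite [RHS]exchange_big /= [LHS]big_mkcond /=; apply: eq_bigr => v _.
case huv: ((u < v)%N && e u v).
  case/andP: huv => _ huv.
  case/andP: (@deg_rng u v huv) => h1 h2.
  rewrite (@tp_sqrt R _ _ h1 h2); apply: eq_bigr => ij _.
  by rewrite mul1n.
by rewrite big1 // => ij _; rewrite mul0n mul0r.
Qed.

End Sums.


Local Close Scope ring_scope.
Section G.
Variable n : nat.
Variable e : rel 'I_n.
Hypothesis esym : symmetric e.
Hypothesis eirr : irreflexive e.
Hypothesis h4 : forall u, (deg e u <= 4)%N.
Local Notation d := (deg e).

Lemma O0 i j u v : O e i j = 0 -> e u v -> ~~ ((d u == i) && (d v == j)).
Proof.
move=> h huv; move: h; rewrite /O (bigD1 u) //= (bigD1 v) //= huv mul1n.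
by case: (_ && _).
Qed.

Lemma me_ii i : 0 < me e i i -> 2 <= nv e i.
Proof.
case/card_gt0P => p; rewrite inE => /and3P[hlt hp /orP[] /andP[/eqP h1 /eqP h2]];
  (have hne : p.1 != p.2 by rewrite neq_ltn hlt);
  (apply: leq_trans (subset_leq_card (_ : [set p.1; p.2] \subset [pred u | d u == i])));
  rewrite ?cards2 ?hne //; apply/subsetP => x; rewrite !inE => /orP[] /eqP ->;
  by rewrite ?h1 ?h2 eqxx.
Qed.

Lemma conn3 : connected_graph e ->
  (forall u v, e u v -> d u == 3 -> d v == 3) -> nv e 3 = 0 \/ nv e 3 = n.
Proof.
move=> hc hcl.
case: (posnP (nv e 3)) => [|h]; first by left.
right; case/card_gt0P: h => x; rewrite inE => hx.
have cl : closed e [pred u | d u == 3].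
  move=> u v huv /=; apply/idP/idP; first exact: hcl.
  by apply: hcl; rewrite esym.
rewrite nvE; transitivity #|'I_n|; last exact: card_ord.
rewrite -sum1_card; apply: eq_bigr => y _.
have := closed_connect cl (hc x y); rewrite !inE hx => <- /=.
by [].
Qed.

Hypothesis hconn : connected_graph e.

Lemma facts :
  (nv e 1 = 2 * me e 1 1 + me e 1 2 + me e 1 3 + me e 1 4) /\
  (2 * nv e 2 = me e 1 2 + 2 * me e 2 2 + me e 2 3 + me e 2 4) /\
  (3 * nv e 3 = me e 1 3 + me e 2 3 + 2 * me e 3 3 + me e 3 4) /\
  (4 * nv e 4 = me e 1 4 + me e 2 4 + me e 3 4 + 2 * me e 4 4) /\
  (n = nv e 0 + nv e 1 + nv e 2 + nv e 3 + nv e 4) /\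
  (0 < me e 4 4 -> 2 <= nv e 4) /\
  (me e 1 3 = 0 -> me e 2 3 = 0 -> me e 3 4 = 0 -> nv e 3 = 0 \/ nv e 3 = n).
Proof.
have D := fun i => deg_rel esym i h4.
split; [|split; [|split; [|split; [|split; [|split]]]]].
- by rewrite -[nv e 1]mul1n D O_eq // !O_neq.
- by rewrite D O_eq // (O_sym esym 2 1) !O_neq.
- by rewrite D O_eq // (O_sym esym 3 1) (O_sym esym 3 2) !O_neq.
- by rewrite D O_eq // (O_sym esym 4 1) (O_sym esym 4 2) (O_sym esym 4 3) !O_neq.
- exact: card_rel.
- exact: me_ii.
move=> h13 h23 h34; apply: conn3 => // u v huv /eqP hu.
have : 1 <= d v <= 4 by case/andP: (@deg_rng _ _ esym h4 _ _ huv).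
have H := fun i j (h : O e i j = 0) => @O0 i j u v h huv.
case: (d v) H => [|[|[|[|[|k]]]]] //= H _.
- by move: (H 3 1); rewrite hu eqxx /= O_sym // O_neq // h13 => /(_ erefl).
- by move: (H 3 2); rewrite hu eqxx /= O_sym // O_neq // h23 => /(_ erefl).
- by move: (H 3 4); rewrite hu eqxx /= O_neq // h34 => /(_ erefl).
Qed.

End G.
Local Open Scope ring_scope.


Definition bounds {R : rcfType} (s2 s5 s10 s13 s17 s20 : R) :=
 [/\ 239/169 < s2 < 338/239, 682/305 < s5 < 843/377, 838/265 < s10 < 721/228,
     1042/289 < s13 < 649/180 & 268/65 < s17 < 1641/398 /\ 1364/305 < s20 < 1525/341].


Lemma slacks (R : rcfType) (s2 s5 s10 s13 s17 s20 : R) :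
  bounds s2 s5 s10 s13 s17 s20 -> [/\ 0 <= s5 - 3/2 * s2, 0 <= s10 - 2 * s2, 0 <= s17 - 5/2 * s2,
   0 <= s13 - 5/2 * s2 & [/\ 0 <= s20 - 3 * s2, 0 <= 5 - 7/2 * s2 &
   0 <= s20 - 3 * s2 - (5 - 7/2 * s2)]].
Proof.
case=> /andP[b2l b2u] /andP[b5l b5u] /andP[b10l b10u] /andP[b13l b13u] [/andP[b17l b17u] /andP[b20l b20u]].
split; [clear -b5l b2u; lra|clear -b10l b2u; lra|clear -b17l b2u; lra|clear -b13l b2u; lra|
  split; [clear -b20l b2u; lra|clear -b2u; lra|clear -b20l b2l; lra]].
Qed.



Definition SOv {R : rcfType} (s2 s5 s10 s13 s17 s20 : R) (m11 m12 m13 m14 m22 m23 m24 m33 m34 m44 : nat) : R :=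
  m11%:R * s2 + m12%:R * s5 + m13%:R * s10 + m14%:R * s17 +
  m22%:R * (2 * s2) + m23%:R * s13 + m24%:R * s20 + m33%:R * (3 * s2) +
  m34%:R * 5 + m44%:R * (4 * s2).

Lemma arith_nat (m11 m12 m13 m14 m22 m23 m24 m33 m34 m44 n0 n1 n2 n3 n4 n : nat) :
  (6 <= n)%N ->
  n1 = (2 * m11 + m12 + m13 + m14)%N ->
  (2 * n2 = m12 + 2 * m22 + m23 + m24)%N ->
  (3 * n3 = m13 + m23 + 2 * m33 + m34)%N ->
  (4 * n4 = m14 + m24 + m34 + 2 * m44)%N ->
  (m11 + m12 + m13 + m14 + m22 + m23 + m24 + m33 + m34 + m44 = n + 2)%N ->
  n = (n0 + n1 + n2 + n3 + n4)%N ->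
  (0 < m44 -> 2 <= n4)%N ->
  (m13 = 0%N -> m23 = 0%N -> m34 = 0%N -> n3 = 0%N \/ n3 = n) ->
  (exists j, (j <= 5)%N /\ [/\ n4 = 0%N, n3 = 4%N, n2 = (n - 4)%N, n1 = 0%N &
     [/\ m11 = 0%N, m12 = 0%N, m13 = 0%N, m14 = 0%N &
         [/\ m24 = 0%N, m34 = 0%N, m44 = 0%N, m23 = (2 + 2 * j)%N &
             (m33 = (5 - j)%N /\ m22 = (n - 5 - j)%N)]]])
  \/ ([/\ n4 = 0%N, n3 = 5%N, n2 = (n - 6)%N, n1 = 1%N &
     [/\ m11 = 0%N, m12 = 1%N, m13 = 0%N, m14 = 0%N &
         [/\ m24 = 0%N, m34 = 0%N, m44 = 0%N, m23 = 1%N &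
             (m33 = 7%N /\ m22 = (n - 7)%N)]]])
  \/ (2 <= n1 + n4 + 3 * n0)%N
  \/ [/\ n1 = 0%N, n4 = 1%N, n0 = 0%N, [/\ m11 = 0%N, m12 = 0%N, m13 = 0%N & m14 = 0%N] &
         m44 = 0%N /\ (m24 + m34 = 4)%N]
  \/ [/\ n1 = 1%N, n4 = 0%N, n0 = 0%N, [/\ m11 = 0%N, m12 = 0%N, m14 = 0%N & m13 = 1%N] &
         [/\ m24 = 0%N, m34 = 0%N & m44 = 0%N]]
  \/ [/\ n1 = 1%N, n4 = 0%N, n0 = 0%N, [/\ m11 = 0%N, m12 = 1%N, m14 = 0%N & m13 = 0%N] &
         [/\ m24 = 0%N, m34 = 0%N, m44 = 0%N & (3 <= m23)%N]].
Proof.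
move=> hn R1 R2 R3 R4 RE RN F1 F2.
have : (2 <= n1 + n4 + 3 * n0)%N \/ (n1 = 0 /\ n4 = 0 /\ n0 = 0)%N \/
       (n1 = 0 /\ n4 = 1 /\ n0 = 0)%N \/ (n1 = 1 /\ n4 = 0 /\ n0 = 0)%N.
  clear F1 F2; lia.
case=> [hK|[[h1 [h4 h0]]|[[h1 [h4 h0]]|[h1 [h4 h0]]]]].
- by right; right; left.
- left; subst n1 n4 n0.
  have z1 : [/\ m11 = 0, m12 = 0, m13 = 0 & m14 = 0]%N by clear F1 F2; split; lia.
  have z4 : [/\ m24 = 0, m34 = 0 & m44 = 0]%N by clear F1 F2; split; lia.
  case: z1 => z11 z12 z13 z14; case: z4 => z24 z34 z44.
  have hn3 : n3 = 4%N by clear F1 F2; lia.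
  have h23 : (0 < m23)%N.
    case: (posnP m23) => // h0; case: (F2 z13 h0 z34); lia.
  clear F1 F2.
  have : (m23 = 2 \/ m23 = 4 \/ m23 = 6 \/ m23 = 8 \/ m23 = 10 \/ m23 = 12)%N by lia.
  case=> [hm|[hm|[hm|[hm|[hm|hm]]]]];
    [exists 0%N|exists 1%N|exists 2%N|exists 3%N|exists 4%N|exists 5%N];
    (split; first by []); (split; [lia|lia|lia|lia|]);
    (split; [lia|lia|lia|lia|]); (split; [lia|lia|lia|lia|]); split; lia.
- right; right; right; left; subst n1 n4 n0.
  have z44 : m44 = 0%N by case: (posnP m44) => // /F1.
  clear F1 F2.
  split => //; first (split; lia); split => //; lia.
- subst n1 n4 n0; clear F1 F2.
  have : (m12 = 0 /\ m13 = 1 \/ m12 = 1 /\ m13 = 0)%N by lia.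
  case=> [[z12 z13]|[z12 z13]]; subst m12 m13.
    right; right; right; right; left.
    split => //; first (split; lia); split; lia.
  case: (ltnP m23 2) => hm.
    right; left.
    (split; [lia|lia|lia|lia|]); (split; [lia|lia|lia|lia|]); (split; [lia|lia|lia|lia|]); split; lia.
  right; right; right; right; right.
  split => //; first (split; lia); split; lia.
Qed.

Lemma arith (R : rcfType) (s2 s5 s10 s13 s17 s20 : R)
  (m11 m12 m13 m14 m22 m23 m24 m33 m34 m44 n0 n1 n2 n3 n4 n : nat) :
  bounds s2 s5 s10 s13 s17 s20 ->
  (6 <= n)%N ->
  n1 = (2 * m11 + m12 + m13 + m14)%N ->
  (2 * n2 = m12 + 2 * m22 + m23 + m24)%N ->
  (3 * n3 = m13 + m23 + 2 * m33 + m34)%N ->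
  (4 * n4 = m14 + m24 + m34 + 2 * m44)%N ->
  (m11 + m12 + m13 + m14 + m22 + m23 + m24 + m33 + m34 + m44 = n + 2)%N ->
  n = (n0 + n1 + n2 + n3 + n4)%N ->
  (0 < m44 -> 2 <= n4)%N ->
  (m13 = 0%N -> m23 = 0%N -> m34 = 0%N -> n3 = 0%N \/ n3 = n) ->
  (exists j, (j <= 5)%N /\ [/\ n4 = 0%N, n3 = 4%N, n2 = (n - 4)%N, n1 = 0%N &
     [/\ m11 = 0%N, m12 = 0%N, m13 = 0%N, m14 = 0%N &
         [/\ m24 = 0%N, m34 = 0%N, m44 = 0%N, m23 = (2 + 2 * j)%N &
             (m33 = (5 - j)%N /\ m22 = (n - 5 - j)%N)]]])
  \/ ([/\ n4 = 0%N, n3 = 5%N, n2 = (n - 6)%N, n1 = 1%N &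
     [/\ m11 = 0%N, m12 = 1%N, m13 = 0%N, m14 = 0%N &
         [/\ m24 = 0%N, m34 = 0%N, m44 = 0%N, m23 = 1%N &
             (m33 = 7%N /\ m22 = (n - 7)%N)]]])
  \/ s5 + s13 + 7 * (3 * s2) + (n%:R - 7) * (2 * s2) <
      SOv s2 s5 s10 s13 s17 s20 m11 m12 m13 m14 m22 m23 m24 m33 m34 m44.
Proof.
move=> hb hn R1 R2 R3 R4 RE RN F1 F2.
have AN := @arith_nat m11 m12 m13 m14 m22 m23 m24 m33 m34 m44 n0 n1 n2 n3 n4 n hn R1 R2 R3 R4 RE RN F1 F2.
case: AN => [H|[H|AN]]; [by left|by right; left|right; right].
clear F1 F2.
have cast := fun (a b : nat) (h : a = b) => congr1 (fun x : nat => x%:R : R) h.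
have r1 := cast _ _ R1; have r2 := cast _ _ R2; have r3 := cast _ _ R3.
have r4 := cast _ _ R4; have rE := cast _ _ RE; have rN := cast _ _ RN.
rewrite /= ?natrD ?natrM in r1 r2 r3 r4 rE rN.
have hL : - m11%:R - m12%:R / 2 + m14%:R / 2 + m23%:R / 2 + m24%:R + m33%:R
    + 3 / 2 * m34%:R + 2 * m44%:R = 6 + (n1%:R + n4%:R + 3 * n0%:R) :> R.
  clear -r1 r2 r3 r4 rE rN; lra.
have hL2 := congr1 (fun x => s2 * x) hL; have hE2 := congr1 (fun x => s2 * x) rE.
simpl in hL2, hE2.
have p0 : forall k : nat, forall c : R, 0 <= c -> 0 <= k%:R * c.
  by move=> k c hc; apply: mulr_ge0.
case: (@slacks R s2 s5 s10 s13 s17 s20 hb) => d12 d13 d14 d23 [d24 d34 d2434].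
have c12 := p0 m12 _ d12.
have c13 := p0 m13 _ d13.
have c14 := p0 m14 _ d14.
have c23 := p0 m23 _ d23.
have c24 := p0 m24 _ d24.
have c34 := p0 m34 _ d34.
have c2434 := p0 m24 _ d2434.
case: hb => /andP[b2l b2u] /andP[b5l b5u] /andP[b10l b10u] /andP[b13l b13u] [_ _].
clear r1 r2 r3 r4 rN hL p0 rE R1 R2 R3 R4 RE RN cast.
rewrite /SOv.
case: AN => [hK|[AN|[AN|AN]]].
- have hKr : (2%:R : R) <= (n1 + n4 + 3 * n0)%N%:R by rewrite ler_nat.
  rewrite !natrD ?natrM in hKr.
  have hKr' : 2 <= (n1%:R + n4%:R + 3 * n0%:R : R) by clear -hKr; lra.
  have hK2 : s2 * 2 <= s2 * (n1%:R + n4%:R + 3 * n0%:R).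
    by rewrite ler_wpM2l //; clear -b2l; lra.
  clear c2434 hKr hKr' d12 d13 d14 d23 d24 d34 d2434 b10l b10u; time lra.
- case: AN => h1 h4 h0 [z11 z12 z13 z14] [z44 hs]; subst.
  have hs2 := congr1 (fun x => x%:R * (5 - 7/2 * s2) : R) hs.
  rewrite /= natrD mulrDl in hs2.
  clear d12 d13 d14 d23 d24 d34 d2434 b10l b10u hs; time lra.
- case: AN => h1 h4 h0 [z11 z12 z14 z13] [z24 z34 z44]; subst.
  clear d12 d13 d14 d23 d24 d34 d2434; time lra.
- case: AN => h1 h4 h0 [z11 z12 z14 z13] [z24 z34 z44 hm3]; subst.
  have h3 : 3 * (s13 - 5/2 * s2) <= m23%:R * (s13 - 5/2 * s2).
    by rewrite ler_wpM2r // (ler_nat R 3).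
  clear d12 d13 d14 d23 d24 d34 d2434 b10l b10u; time lra.
Qed.


Lemma sqrt_eq (R : rcfType) (x y : R) : 0 <= y -> y ^+ 2 = x -> Num.sqrt x = y.
Proof. by move=> hy <-; rewrite sqrtr_sqr ger0_norm. Qed.

Lemma sqrt_bnd (R : rcfType) (c lo hi : R) : 0 <= lo -> lo * lo < c -> c < hi * hi -> 0 <= hi ->
  lo < Num.sqrt c < hi.
Proof.
move=> hlo h1 h2 hhi.
have c0 : 0 <= c by nra.
have s0 := sqrtr_ge0 c; have s2 := sqr_sqrtr c0.
rewrite expr2 in s2.
apply/andP; split; nra.
Qed.

Lemma sq_bounds (R : rcfType) :
  bounds (Num.sqrt 2 : R) (Num.sqrt 5) (Num.sqrt 10) (Num.sqrt 13) (Num.sqrt 17) (Num.sqrt 20).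
Proof.
split; [ | | | | split]; apply: sqrt_bnd; lra.
Qed.

Lemma fq_vals (R : rcfType) :
  [/\ fq R (1,1) = Num.sqrt 2, fq R (1,2) = Num.sqrt 5, fq R (1,3) = Num.sqrt 10,
      fq R (1,4) = Num.sqrt 17 &
  [/\ fq R (2,2) = 2 * Num.sqrt 2, fq R (2,3) = Num.sqrt 13, fq R (2,4) = Num.sqrt 20,
      fq R (3,3) = 3 * Num.sqrt 2 &
      fq R (3,4) = 5 /\ fq R (4,4) = 4 * Num.sqrt 2]].
Proof.
have s2 := sqr_sqrtr (ler0n R 2); have s0 := sqrtr_ge0 (2 : R).
rewrite /fq /=.
split; [ | | | | split]; try done.
- rewrite (_ : (2 ^ 2 + 2 ^ 2)%N = 8%N) //; apply: sqrt_eq; first lra.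
  rewrite exprMn s2; lra.
- rewrite (_ : (3 ^ 2 + 3 ^ 2)%N = 18%N) //; apply: sqrt_eq; first lra.
  rewrite exprMn s2; lra.
- split.
    rewrite (_ : (3 ^ 2 + 4 ^ 2)%N = 25%N) //; apply: sqrt_eq; first lra.
    rewrite expr2; lra.
  rewrite (_ : (4 ^ 2 + 4 ^ 2)%N = 32%N) //; apply: sqrt_eq; first lra.
  rewrite exprMn s2; lra.
Qed.

Lemma gfacts (R : rcfType) n (e : rel 'I_n) : CTG e ->
  [/\ symmetric e, irreflexive e, connected_graph e, (forall u, deg e u <= 4)%N &
  (me e 1 1 + me e 1 2 + me e 1 3 + me e 1 4 + me e 2 2 + me e 2 3 + me e 2 4 +
   me e 3 3 + me e 3 4 + me e 4 4 = n + 2)%N /\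
  SO R e = SOv (Num.sqrt 2) (Num.sqrt 5) (Num.sqrt 10) (Num.sqrt 13) (Num.sqrt 17) (Num.sqrt 20)
     (me e 1 1) (me e 1 2) (me e 1 3) (me e 1 4) (me e 2 2) (me e 2 3) (me e 2 4)
     (me e 3 3) (me e 3 4) (me e 4 4)].
Proof.
case=> [[esym eirr] hc hE h4].
split => //; split.
  move: hE; rewrite (@nedges_pairs n e esym h4) /mpairs !big_cons big_nil /=; lia.
rewrite (@SO_pairs n e esym h4 R) /mpairs !big_cons big_nil /=.
case: (fq_vals R) => -> -> -> -> [-> -> -> -> [-> ->]].
rewrite /SOv; ring.
Qed.

Lemma mt9 n (e : rel 'I_n) j : mtable e [:: ((2,3), 2 + 2 * j); ((3,3), 5 - j); ((2,2), n - 5 - j)]%N ->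
  [/\ me e 1 1 = 0%N, me e 1 2 = 0%N, me e 1 3 = 0%N, me e 1 4 = 0%N &
  [/\ me e 2 2 = (n - 5 - j)%N, me e 2 3 = (2 + 2 * j)%N, me e 2 4 = 0%N, me e 3 3 = (5 - j)%N &
      me e 3 4 = 0%N /\ me e 4 4 = 0%N]].
Proof.
move=> hm.
move: (hm (1,1) isT) (hm (1,2) isT) (hm (1,3) isT) (hm (1,4) isT) (hm (2,2) isT)
  (hm (2,3) isT) (hm (2,4) isT) (hm (3,3) isT) (hm (3,4) isT) (hm (4,4) isT) => /=.
by move=> -> -> -> -> -> -> -> -> -> ->.
Qed.

Lemma mt65 n (e : rel 'I_n) : mtable e [:: ((1,2), 1); ((2,3), 1); ((3,3), 7); ((2,2), n - 7)]%N ->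
  [/\ me e 1 1 = 0%N, me e 1 2 = 1%N, me e 1 3 = 0%N, me e 1 4 = 0%N &
  [/\ me e 2 2 = (n - 7)%N, me e 2 3 = 1%N, me e 2 4 = 0%N, me e 3 3 = 7%N &
      me e 3 4 = 0%N /\ me e 4 4 = 0%N]].
Proof.
move=> hm.
move: (hm (1,1) isT) (hm (1,2) isT) (hm (1,3) isT) (hm (1,4) isT) (hm (2,2) isT)
  (hm (2,3) isT) (hm (2,4) isT) (hm (3,3) isT) (hm (3,4) isT) (hm (4,4) isT) => /=.
by move=> -> -> -> -> -> -> -> -> -> ->.
Qed.

Lemma mk_mtable n (e : rel 'I_n) vals :
  (forall a b, (a, b) \in mpairs ->
     me e a b = odflt 0%N (omap snd (ohead (filter (fun p => p.1 == (a, b)) vals)))) ->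
  mtable e vals.
Proof. by move=> h [a b] /h. Qed.

Lemma SO9 (R : rcfType) n (e : rel 'I_n) j : (j <= 5)%N -> gamma9 j e ->
  SO R e = (2 + 2 * j%:R) * Num.sqrt 13 + (5 - j%:R) * (3 * Num.sqrt 2)
           + (n%:R - 5 - j%:R) * (2 * Num.sqrt 2).
Proof.
move=> hj [hC [_ _ _ _ hm]].
case: (@gfacts R n e hC) => _ _ _ _ [hE ->].
case: (@mt9 n e j hm) => z11 z12 z13 z14 [z22 z23 z24 z33 [z34 z44]].
rewrite z11 z12 z13 z14 z22 z23 z24 z33 z34 z44 in hE *.
have h5 : (5 + j <= n)%N by lia.
have -> : (n - 5 - j = n - (5 + j))%N by lia.
rewrite /SOv !natrB // !natrD ?natrM; ring.
Qed.

Lemma SO65 (R : rcfType) n (e : rel 'I_n) : gamma65 e ->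
  SO R e = Num.sqrt 5 + Num.sqrt 13 + 7 * (3 * Num.sqrt 2) + (n%:R - 7) * (2 * Num.sqrt 2).
Proof.
move=> [hC [_ _ _ _ hm]].
case: (@gfacts R n e hC) => _ _ _ _ [hE ->].
case: (@mt65 n e hm) => z11 z12 z13 z14 [z22 z23 z24 z33 [z34 z44]].
rewrite z11 z12 z13 z14 z22 z23 z24 z33 z34 z44 in hE *.
have h7 : (7 <= n)%N by lia.
rewrite /SOv !natrB //; ring.
Qed.

Lemma mk9 n (e : rel 'I_n) j : CTG e ->
  [/\ nv e 4 = 0%N, nv e 3 = 4%N, nv e 2 = (n - 4)%N, nv e 1 = 0%N &
     [/\ me e 1 1 = 0%N, me e 1 2 = 0%N, me e 1 3 = 0%N, me e 1 4 = 0%N &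
         [/\ me e 2 4 = 0%N, me e 3 4 = 0%N, me e 4 4 = 0%N, me e 2 3 = (2 + 2 * j)%N &
             (me e 3 3 = (5 - j)%N /\ me e 2 2 = (n - 5 - j)%N)]]] ->
  gamma9 j e.
Proof.
move=> hC [h4 h3 h2 h1 [z11 z12 z13 z14 [z24 z34 z44 z23 [z33 z22]]]].
split => //; split => //; apply: mk_mtable => a b.
rewrite /mpairs !inE.
do 9 (case/orP; first by move/eqP => [-> ->] /=).
by move/eqP => [-> ->] /=.
Qed.

Lemma mk65 n (e : rel 'I_n) : CTG e ->
  [/\ nv e 4 = 0%N, nv e 3 = 5%N, nv e 2 = (n - 6)%N, nv e 1 = 1%N &
     [/\ me e 1 1 = 0%N, me e 1 2 = 1%N, me e 1 3 = 0%N, me e 1 4 = 0%N &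
         [/\ me e 2 4 = 0%N, me e 3 4 = 0%N, me e 4 4 = 0%N, me e 2 3 = 1%N &
             (me e 3 3 = 7%N /\ me e 2 2 = (n - 7)%N)]]] ->
  gamma65 e.
Proof.
move=> hC [h4 h3 h2 h1 [z11 z12 z13 z14 [z24 z34 z44 z23 [z33 z22]]]].
split => //; split => //; apply: mk_mtable => a b.
rewrite /mpairs !inE.
do 9 (case/orP; first by move/eqP => [-> ->] /=).
by move/eqP => [-> ->] /=.
Qed.


Theorem theorem3p12 (R : rcfType) (n : nat) (hn : (6 <= n)%N)
  (G1 G2 G3 G4 G5 G6 G7 G : rel 'I_n) :
  gamma9 0 G1 -> gamma9 1 G2 -> gamma9 2 G3 -> gamma9 3 G4 ->
  gamma9 4 G5 -> gamma9 5 G6 -> gamma65 G7 ->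
  CTG G ->
  ~ (gamma9 0 G \/ gamma9 1 G \/ gamma9 2 G \/ gamma9 3 G \/
     gamma9 4 G \/ gamma9 5 G \/ gamma65 G) ->
  (SO R G1 < SO R G2) /\ (SO R G2 < SO R G3) /\ (SO R G3 < SO R G4) /\
  (SO R G4 < SO R G5) /\ (SO R G5 < SO R G6) /\ (SO R G6 < SO R G7) /\
  (SO R G7 < SO R G).
Proof.
move=> g1 g2 g3 g4 g5 g6 g7 hG hnot.
have S1 := @SO9 R n G1 0 isT g1.
have S2 := @SO9 R n G2 1 isT g2.
have S3 := @SO9 R n G3 2 isT g3.
have S4 := @SO9 R n G4 3 isT g4.
have S5 := @SO9 R n G5 4 isT g5.
have S6 := @SO9 R n G6 5 isT g6.
have S7 := @SO65 R n G7 g7.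
have hb := sq_bounds R.
case: (@gfacts R n G hG) => esym eirr hc h4 [hE hSO].
case: (@facts n G esym eirr h4 hc) => R1 [R2 [R3 [R4 [RN [F1 F2]]]]].
have A := @arith R _ _ _ _ _ _ (me G 1 1) (me G 1 2) (me G 1 3) (me G 1 4) (me G 2 2)
  (me G 2 3) (me G 2 4) (me G 3 3) (me G 3 4) (me G 4 4)
  (nv G 0) (nv G 1) (nv G 2) (nv G 3) (nv G 4) n hb hn R1 R2 R3 R4 hE RN F1 F2.
case: A => [[j [hj H]]|[H|H]].
- exfalso; apply: hnot; have g := @mk9 n G j hG H.
  clear H; by case: j hj g => [|[|[|[|[|[|j]]]]]] //= _ g;
    [left|right;left|right;right;left|do 3 right; left|do 4 right; left|do 5 right; left].
- by exfalso; apply: hnot; do 6 right; exact: @mk65 n G hG H.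
rewrite -hSO in H.
rewrite S1 S2 S3 S4 S5 S6 S7.
case: hb => /andP[b2l b2u] /andP[b5l b5u] _ /andP[b13l b13u] _.
split; [lra|split; [lra|split; [lra|split; [lra|split; [lra|split; [lra|lra]]]]]].
Qed.
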